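(* Consider the following private response scheme. Fix a privacy parameter $\epsilon>0$, a response budget $K\in\mathbb{Z}_{\ge 1}$, and $P\in\mathbb{Z}_{\ge 1}$. There is a finite list of candidate patterns $\mathcal{C}_t(1),\dots,\mathcal{C}_t(|\mathcal{C}_t|)$, and each candidate is assigned to exactly $P$ distinct data owners; each data owner is assigned at most $K$ candidates in total (and never the same candidate twice). Data owner $j$, holding local data $d_j$, forms a vector $R_j\in\mathbb{Z}^{|\mathcal{C}_t|}$ with $$R_j[i]=\begin{cases}0 & \text{if } j \text{ is not assigned } \mathcal{C}_t(i),\\ \mathcal{X}_{j,i}-\mathcal{Y}_{j,i} & \text{if } j \text{ is assigned } \mathcal{C}_t(i) \text{ and } \mathcal{C}_t(i)\notin d_j,\\ 1+\mathcal{X}_{j,i}-\mathcal{Y}_{j,i} & \text{if } j \text{ is assigned } \mathcal{C}_t(i) \text{ and } \mathcal{C}_t(i)\in d_j,\end{cases}$$ where all $\mathcal{X}_{j,i},\mathcal{Y}_{j,i}$ are mutually independent random variables with the Pólya$(1/P,\,e^{-\epsilon/K})$ distribution. The vectors $R_j$ are uploaded via secure aggregation, so that the data analyst learns only the sum $\sum_j R_j$. Then this scheme satisfies $\epsilon$-distributed differential privacy for every data owner; that is, the released aggregate $\sum_j R_j$ satisfies $\epsilon$-differential privacy with respect to changing the local data $d_j$ of any single data owner $j$.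
   Context: The Pólya$(r,p)$ distribution ($r>0$, $p\in(0,1)$) has probability mass function $\mathbb{P}(\mathcal{X}=x)=\binom{r+x-1}{r-1}p^x(1-p)^r$ for $x\in\mathbb{Z}_{\ge 0}$. A two-sided geometric random variable $G(\alpha)$, $\alpha\in(0,1)$, has $\mathbb{P}(G(\alpha)=x)=\frac{1-\alpha}{1+\alpha}\alpha^{|x|}$ for $x\in\mathbb{Z}$. A randomized mechanism $M$ satisfies $\epsilon$-differential privacy if for all neighbouring inputs $S,S'$ and all sets $O$ of outputs, $\mathbb{P}(M(S)\in O)\le e^{\epsilon}\mathbb{P}(M(S')\in O)$. ''Distributed differential privacy'' means: individual uploads are hidden by secure aggregation (the analyst only sees their sum), and the aggregated sum satisfies (central) differential privacy. The notation $\mathcal{C}_t(i)\in d_j$ means that candidate pattern $\mathcal{C}_t(i)$ is contained in data owner $j$'s local data (e.g. the itemset or subsequence occurs in it). *)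

(* Defs.v *)
From HB Require Import structures.
From mathcomp Require Import all_boot all_order all_algebra.
From mathcomp Require Import all_classical all_reals.
From mathcomp Require Import ereal sequences exp esum.
Set Implicit Arguments. Unset Strict Implicit. Unset Printing Implicit Defensive.
Import Order.TTheory GRing.Theory Num.Theory.
Local Open Scope ring_scope.

(* Generalized binomial coefficient binom(r+x-1, r-1) = binom(r+x-1, x)
   = prod_{k<x} (r+k)/(k+1), valid for real r > 0. *)
Definition gbinom {R : realType} (r : R) (x : nat) : R :=
  \prod_(k < x) ((r + k%:R) / (k.+1)%:R).

Definition polya_pmf {R : realType} (r p : R) (x : nat) : R :=
  gbinom r x * p ^+ x * powR (1 - p) r.

(* Noise space: a pair (X_{j,i}, Y_{j,i}) for every owner j and candidate i. *)
Definition noise (n m : nat) := {ffun 'I_n * 'I_m -> nat * nat}.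

Definition noise_pmf {R : realType} (r p : R) (n m : nat) (nu : noise n m) : R :=
  \prod_(q : 'I_n * 'I_m) (polya_pmf r p (nu q).1 * polya_pmf r p (nu q).2).

Definition upload {Pat D : Type} (mem : Pat -> D -> bool) (n m : nat)
  (C : 'I_m -> Pat) (A : 'I_n -> 'I_m -> bool) (d : 'I_n -> D)
  (nu : noise n m) (j : 'I_n) (i : 'I_m) : int :=
  if A j i then (nat_of_bool (mem (C i) (d j)))%:Z + ((nu (j, i)).1)%:Z
                  - ((nu (j, i)).2)%:Z
  else 0.

Definition aggregate {Pat D : Type} (mem : Pat -> D -> bool) (n m : nat)
  (C : 'I_m -> Pat) (A : 'I_n -> 'I_m -> bool) (d : 'I_n -> D)
  (nu : noise n m) : 'I_m -> int :=
  fun i => \sum_(j < n) upload mem C A d nu j i.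

Definition prob_out {R : realType} {Pat D : Type} (mem : Pat -> D -> bool)
  (n m : nat) (r p : R) (C : 'I_m -> Pat) (A : 'I_n -> 'I_m -> bool)
  (d : 'I_n -> D) (O : set ('I_m -> int)) : \bar R :=
  esum [set nu : noise n m | O (aggregate mem C A d nu)]
       (fun nu => (noise_pmf r p nu)%:E).

(* Main.v *)
Require Import Defs.
From HB Require Import structures.
From mathcomp Require Import all_boot all_order all_algebra.
From mathcomp Require Import all_classical all_reals.
From mathcomp Require Import ereal sequences exp esum.
From mathcomp Require Import ring lra zify.
Import Order.TTheory GRing.Theory Num.Theory.
Set Implicit Arguments. Unset Strict Implicit. Unset Printing Implicit Defensive.
Local Open Scope ring_scope.

Definition cmp (b : bool) (xy : nat * nat) : nat := if b then xy.1 else xy.2.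
Definition bump (b : bool) (xy : nat * nat) : nat * nat :=
  if b then (xy.1.+1, xy.2) else (xy.1, xy.2.+1).
Definition sh (n m : nat) (b : bool) (q0 : 'I_n * 'I_m) (nu : noise n m) : noise n m :=
  [ffun q => if q == q0 then bump b (nu q) else nu q].

Lemma sh_inj n m b q0 : injective (@sh n m b q0).
Proof.
move=> nu1 nu2 /ffunP H; apply/ffunP => q; have := H q; rewrite !ffunE.
case: eqP => _ //; rewrite /bump; case: b H => _; case: (nu1 q) (nu2 q) => ?? [??] /= [-> ->] //.
Qed.

Lemma gbinomS (R : realType) (r : R) x :
  gbinom r x.+1 = gbinom r x * ((r + x%:R) / (x.+1)%:R).
Proof. by rewrite /gbinom big_ord_recr. Qed.

Lemma polyaS (R : realType) (r p : R) x :
  polya_pmf r p x.+1 = polya_pmf r p x * (p * (r + x%:R) / (x.+1)%:R).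
Proof. rewrite /polya_pmf gbinomS exprS; ring. Qed.

Lemma gbinom_ge0 (R : realType) (r : R) x : 0 <= r -> 0 <= gbinom r x.
Proof.
move=> r0; rewrite /gbinom; apply: prodr_ge0 => k _.
by apply: divr_ge0; [apply: addr_ge0 | ].
Qed.

Lemma polya_ge0 (R : realType) (r p : R) x : 0 <= r -> 0 <= p -> 0 <= polya_pmf r p x.
Proof.
move=> r0 p0; rewrite /polya_pmf; apply: mulr_ge0; last exact: powR_ge0.
by apply: mulr_ge0; [apply: gbinom_ge0|apply: exprn_ge0].
Qed.

Lemma W_ge0 (R : realType) (r p : R) n m (nu : noise n m) : 0 <= r -> 0 <= p ->
  0 <= noise_pmf r p nu.
Proof.
move=> r0 p0; apply: prodr_ge0 => q _; apply: mulr_ge0; exact: polya_ge0.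
Qed.

Lemma W_sh (R : realType) (r p : R) n m (b : bool) (q0 : 'I_n * 'I_m) (nu : noise n m) :
  noise_pmf r p (sh b q0 nu) = noise_pmf r p nu *
    (p * (r + (cmp b (nu q0))%:R) / (cmp b (nu q0)).+1%:R).
Proof.
rewrite /noise_pmf (bigD1 q0) //= [in RHS](bigD1 q0) //= ffunE eqxx.
rewrite (eq_bigr (fun q => polya_pmf r p (nu q).1 * polya_pmf r p (nu q).2)); last first.
  by move=> q /negPf ne; rewrite ffunE ne.
by case: b => /=; rewrite polyaS; ring.
Qed.

Lemma esumZ (R : realType) (T : choiceType) (S : set T) (f : T -> \bar R) (c : R) :
  0 < c -> (forall x, (0 <= f x)%E) ->
  esum S (fun i => c%:E * f i)%E = (c%:E * esum S f)%E.
Proof.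
move=> c0 f0; rewrite /esum -ereal_sup_pZl //; congr ereal_sup.
apply/seteqP; split => x /=.
  by move=> [A HA <-]; exists (\sum_(i \in A) f i)%E; [exists A | rewrite ge0_mule_fsumr].
by move=> [y [A HA <-] <-]; exists A => //; rewrite ge0_mule_fsumr.
Qed.

Lemma esum_subset (R : realType) (T : choiceType) (S1 S2 : set T) (f : T -> \bar R) :
  (forall x, S1 x -> S2 x) -> (forall x, (0 <= f x)%E) -> (esum S1 f <= esum S2 f)%E.
Proof.
move=> sub f0; rewrite (esum_mkcond S1) (esum_mkcond S2); apply: le_esum => x _.
case: (boolP (x \in S1)) => h1; case: (boolP (x \in S2)) => h2 //.
by move: h2; rewrite notin_setE => /(_ (sub x (set_mem h1))).
Qed.

Definition Ssum n m (A : 'I_n -> 'I_m -> bool) (i0 : 'I_m) (b : bool) (nu : noise n m) : nat :=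
  \sum_(k < n | A k i0) cmp b (nu (k, i0)).

Lemma cmp_sh n m (b : bool) (q : 'I_n * 'I_m) (nu : noise n m) :
  cmp b (sh b q nu q) = (cmp b (nu q)).+1.
Proof. by rewrite ffunE eqxx; case: b. Qed.

Lemma Ssum_sh n m (A : 'I_n -> 'I_m -> bool) i0 b k (nu : noise n m) : A k i0 ->
  Ssum A i0 b (sh b (k, i0) nu) = (Ssum A i0 b nu).+1.
Proof.
move=> Ak; rewrite /Ssum (bigD1 k) //= [in RHS](bigD1 k) //= cmp_sh addSn; congr (S (_ + _)).
apply: eq_bigr => k' /andP[_ ne]; rewrite ffunE.
by rewrite xpair_eqE (negbTE ne).
Qed.

Definition gterm (R : realType) (r p : R) n m (A : 'I_n -> 'I_m -> bool) i0 b k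
  (nu : noise n m) : R :=
  ((cmp b (nu (k, i0)))%:R / (Ssum A i0 b nu)%:R) * noise_pmf r p nu.

Lemma gterm_ge0 (R : realType) (r p : R) n m (A : 'I_n -> 'I_m -> bool) i0 b k nu :
  0 <= r -> 0 <= p -> 0 <= gterm r p A i0 b k nu.
Proof.
move=> r0 p0; apply: mulr_ge0; [by apply: divr_ge0 | exact: W_ge0].
Qed.

Lemma pt1 (R : realType) (r p : R) n m (A : 'I_n -> 'I_m -> bool) i0 b (nu : noise n m) :
  r * (#|[set k | A k i0]|)%:R = 1 ->
  p * noise_pmf r p nu = \sum_(k < n | A k i0) gterm r p A i0 b k (sh b (k, i0) nu).
Proof.
move=> hr.
set S := Ssum A i0 b nu.
have S1 : (S.+1)%:R != 0 :> R by rewrite pnatr_eq0.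
rewrite (eq_bigr (fun k => (p * noise_pmf r p nu / (S.+1)%:R) * (r + (cmp b (nu (k, i0)))%:R))); last first.
  move=> k Ak; rewrite /gterm Ssum_sh // W_sh cmp_sh -/S.
  have x1 : ((cmp b (nu (k, i0))).+1)%:R != 0 :> R by rewrite pnatr_eq0.
  by field; rewrite !(addrC 1) !natr1 S1 x1.
rewrite -mulr_sumr big_split /= -natr_sum -/(Ssum A i0 b nu) -/S.
have -> : \sum_(k < n | A k i0) r = \sum_(k in [set k | A k i0]) r.
  by apply: eq_bigl => k; rewrite inE.
rewrite sumr_const -(mulr_natr r) hr -natr1.
have S1' : (S%:R + 1) != 0 :> R by rewrite natr1.
by field.
Qed.

Lemma pt2 (R : realType) (r p : R) n m (A : 'I_n -> 'I_m -> bool) i0 b (nu : noise n m) :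
  0 <= r -> 0 <= p ->
  \sum_(k < n | A k i0) gterm r p A i0 b k nu <= noise_pmf r p nu.
Proof.
move=> r0 p0; rewrite /gterm -mulr_suml -mulr_suml -natr_sum -/(Ssum A i0 b nu).
have [->|S0] := eqVneq (Ssum A i0 b nu) 0%N.
  by rewrite invr0 mulr0 mul0r; exact: W_ge0.
by rewrite mulfV ?pnatr_eq0 // mul1r.
Qed.

Lemma core (R : realType) (r p : R) n m (A : 'I_n -> 'I_m -> bool) i0 (b : bool)
  (Phi Psi : set (noise n m)) :
  0 <= r -> 0 < p -> r * (#|[set k | A k i0]|)%:R = 1 ->
  (forall k nu, A k i0 -> Phi nu -> Psi (sh b (k, i0) nu)) ->
  (p%:E * esum Phi (fun nu => (noise_pmf r p nu)%:E) <=
   esum Psi (fun nu => (noise_pmf r p nu)%:E))%E.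
Proof.
move=> r0 p0 hr hsub.
have p0' : 0 <= p by exact: ltW.
rewrite -esumZ //; last by move=> x; rewrite lee_fin; exact: W_ge0.
rewrite (eq_esum (b := fun nu => (\sum_(k < n | A k i0)
           (gterm r p A i0 b k (sh b (k, i0) nu))%:E)%E)); last first.
  by move=> nu _; rewrite sumEFin -EFinM (pt1 p b nu hr).
rewrite esum_sum; last by move=> *; rewrite lee_fin; exact: gterm_ge0.
apply: (@le_trans _ _ (\sum_(k < n | A k i0) esum Psi (fun nu => (gterm r p A i0 b k nu)%:E))%E).
  apply: lee_sum => k Ak.
  rewrite -(esum_image Phi (sh b (k, i0)) (fun nu => (gterm r p A i0 b k nu)%:E)); last first.
    by move=> x y _ _; apply: sh_inj.
  apply: esum_subset; first by move=> x [y Py <-]; exact: hsub.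
  by move=> x; rewrite lee_fin; exact: gterm_ge0.
rewrite -esum_sum; last by move=> *; rewrite lee_fin; exact: gterm_ge0.
by apply: le_esum => nu _; rewrite sumEFin lee_fin; exact: pt2.
Qed.

Definition Fn n m (A : 'I_n -> 'I_m -> bool) (nu : noise n m) (i : 'I_m) : int :=
  \sum_(j < n) (if A j i then ((nu (j, i)).1)%:Z - ((nu (j, i)).2)%:Z else 0).

Lemma Fn_sh n m (A : 'I_n -> 'I_m -> bool) (i0 : 'I_m) (b : bool) k (nu : noise n m) i :
  A k i0 ->
  Fn A (sh b (k, i0) nu) i = Fn A nu i + (if i == i0 then (if b then 1 else -1) else 0).
Proof.
move=> Ak; rewrite /Fn; case: (eqVneq i i0) => [->|ne].
  rewrite (bigD1 k) //= [in RHS](bigD1 k) //= ffunE eqxx Ak.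
  rewrite (eq_bigr (fun j => if A j i0 then ((nu (j, i0)).1)%:Z - ((nu (j, i0)).2)%:Z
                              else 0)); last first.
    by move=> j ne; rewrite ffunE xpair_eqE (negbTE ne).
  by case: b; rewrite /bump /=; lia.
rewrite addr0; apply: eq_bigr => j _.
by rewrite ffunE xpair_eqE (negbTE ne) andbF.
Qed.

Definition bias (Pat D : Type) (mem : Pat -> D -> bool) n m (C : 'I_m -> Pat)
  (A : 'I_n -> 'I_m -> bool) (d : 'I_n -> D) (i : 'I_m) : int :=
  \sum_(j < n) (if A j i then (nat_of_bool (mem (C i) (d j)))%:Z else 0).

Lemma agg_eq (Pat D : Type) (mem : Pat -> D -> bool) n m (C : 'I_m -> Pat)
  (A : 'I_n -> 'I_m -> bool) (d : 'I_n -> D) (nu : noise n m) :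
  aggregate mem C A d nu = (fun i => bias mem C A d i + Fn A nu i).
Proof.
apply: funext => i; rewrite /aggregate /bias /Fn -big_split; apply: eq_bigr => j _.
by rewrite /upload; case: (A j i) => /=; [rewrite addrA | rewrite addr0].
Qed.

Definition Q (R : realType) (r p : R) n m (A : 'I_n -> 'I_m -> bool)
  (O : set ('I_m -> int)) (c : 'I_m -> int) : \bar R :=
  esum (fun nu : noise n m => O (fun i => c i + Fn A nu i))
       (fun nu => (noise_pmf r p nu)%:E).

Lemma step (R : realType) (r p : R) n m (A : 'I_n -> 'I_m -> bool) O i0
  (c c1 : 'I_m -> int) (b : bool) :
  0 <= r -> 0 < p -> r * (#|[set k | A k i0]|)%:R = 1 ->
  (forall i, c i = c1 i + (if i == i0 then (if b then 1 else -1) else 0)) ->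
  (p%:E * Q r p A O c <= Q r p A O c1)%E.
Proof.
move=> r0 p0 hr hc; apply: (core (A := A) (i0 := i0) (b := b)) => // k nu Ak HO.
suff -> : (fun i => c1 i + Fn A (sh b (k, i0) nu) i) = (fun i => c i + Fn A nu i) by [].
apply: funext => i; rewrite hc Fn_sh // addrA; exact: addrAC.
Qed.

Lemma chain (R : realType) (r p : R) n m (A : 'I_n -> 'I_m -> bool) O
  (c' : 'I_m -> int) :
  0 <= r -> 0 < p -> (forall i0, r * (#|[set k | A k i0]|)%:R = 1) ->
  forall t c, #|[set i | c i != c' i]| = t -> (forall i, `|c i - c' i| <= 1) ->
  (Q r p A O c <= ((p^-1) ^+ t)%:E * Q r p A O c')%E.
Proof.
move=> r0 p0 hr; elim=> [|t IH] c hc hb.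
  have -> : c = c'.
    apply: funext => i; apply/eqP; apply: contraT => ne.
    have : i \in [set i | c i != c' i] by rewrite inE.
    by move/eqP: hc; rewrite cards_eq0 => /eqP ->; rewrite inE.
  by rewrite expr0 mul1e.
have : [set i | c i != c' i] != finset.set0 by rewrite -card_gt0 hc.
case/set0Pn => i0; rewrite inE => ne.
pose c1 := fun i => if i == i0 then c' i else c i.
have hc1 : #|[set i | c1 i != c' i]| = t.
  have -> : [set i | c1 i != c' i] = [set i | c i != c' i] :\ i0.
    apply/setP => i; rewrite !inE /c1; case: (eqVneq i i0) => [->|nei] /=.
      by rewrite !eqxx.
    by [].
  have := cardsD1 i0 [set i | c i != c' i]; rewrite hc inE ne add1n.
  by case.
have hb1 : forall i, `|c1 i - c' i| <= 1.
  by move=> i; rewrite /c1; case: eqP => _; [rewrite subrr normr0 | exact: hb].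
have IH' := IH c1 hc1 hb1.
have hstep : (p%:E * Q r p A O c <= Q r p A O c1)%E.
  apply: (@step _ r p n m A O i0 c c1 (c i0 - c' i0 == 1)) => // i.
  rewrite /c1; case: eqVneq => [->|_]; last by rewrite addr0.
  have := hb i0; move: ne; case: (c i0 - c' i0 =P 1) => h /= ? ?; lia.
apply: (@le_trans _ _ ((p^-1)%:E * (p%:E * Q r p A O c)))%E.
  by rewrite muleA -EFinM mulVf ?gt_eqF // mul1e.
apply: le_trans (lee_wpmul2l _ hstep) _; first by rewrite lee_fin invr_ge0 ltW.
rewrite exprS EFinM -muleA; apply: lee_wpmul2l => //.
by rewrite lee_fin invr_ge0 ltW.
Qed.

Theorem theorem2 (R : realType) (Pat D : Type) (mem : Pat -> D -> bool)
  (eps : R) (K P n m : nat) (C : 'I_m -> Pat) (A : 'I_n -> 'I_m -> bool) :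
  0 < eps -> (1 <= K)%N -> (1 <= P)%N ->
  (forall i : 'I_m, #|[set j : 'I_n | A j i]| = P) ->
  (forall j : 'I_n, (#|[set i : 'I_m | A j i]| <= K)%N) ->
  forall (j : 'I_n) (d d' : 'I_n -> D),
    (forall k : 'I_n, k != j -> d k = d' k) ->
    forall O : set ('I_m -> int),
      (prob_out mem (P%:R)^-1 (expR (- eps / K%:R)) C A d O <=
       (expR eps)%:E * prob_out mem (P%:R)^-1 (expR (- eps / K%:R)) C A d' O)%E.
Proof.
move=> eps0 K1 P1 hcard hK j d d' hd O.
set p := expR (- eps / K%:R).
set r := (P%:R)^-1 : R.
have p0 : 0 < p := expR_gt0 _.
have r0 : 0 <= r by rewrite invr_ge0.
have hr : forall i0, r * (#|[set k | A k i0]|)%:R = 1.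
  by move=> i0; rewrite hcard mulVf // pnatr_eq0 -lt0n.
have eqQ : forall dd, prob_out mem r p C A dd O = Q r p A O (bias mem C A dd).
  move=> dd; rewrite /prob_out /Q; congr esum; apply: funext => nu.
  by rewrite /mkset agg_eq.
rewrite !eqQ.
have hdiff : forall i, bias mem C A d i - bias mem C A d' i =
    if A j i then (nat_of_bool (mem (C i) (d j)))%:Z - (nat_of_bool (mem (C i) (d' j)))%:Z
    else 0.
  move=> i; rewrite /bias -sumrB (bigD1 j) //= big1 ?addr0.
    by case: (A j i); rewrite ?subr0.
  by move=> k nk; rewrite hd //; case: (A k i); rewrite subrr.
have hb : forall i, `|bias mem C A d i - bias mem C A d' i| <= 1.
  move=> i; rewrite hdiff; case: (A j i) => //.
  by case: (mem _ _); case: (mem _ _).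
have ht : (#|[set i | bias mem C A d i != bias mem C A d' i]| <= K)%N.
  apply: leq_trans (hK j); apply: subset_leq_card; apply/fintype.subsetP => i; rewrite !inE.
  by apply: contraR => nA; rewrite -subr_eq0 hdiff (negbTE nA).
apply: le_trans (@chain R r p n m A O (bias mem C A d') r0 p0 hr _ (bias mem C A d) erefl hb) _.
apply: lee_wpmul2r; first by rewrite /Q; apply: esum_ge0 => nu _; rewrite lee_fin; apply: W_ge0 => //; exact: ltW.
rewrite lee_fin.
have pinv : p^-1 = expR (eps / K%:R) by rewrite /p mulNr expRN invrK.
have K0 : K%:R != 0 :> R by rewrite pnatr_eq0 -lt0n.
have p1 : 1 <= p^-1.
  rewrite pinv; apply: le_trans (expR_ge1Dx _); rewrite lerDl divr_ge0 //; first exact: ltW.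
apply: le_trans (ler_weXn2l p1 ht) _.
rewrite pinv -expRM_natl.
have -> : K%:R * (eps / K%:R) = eps by field.
by [].
Qed.
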